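(* Let $\mathcal{M}=(E,\rho)$ be a $q$-matroid, $E_1=\mathrm{cl}(0)$, and $E_2\le E$ with $E=E_1\oplus E_2$. Let $\mathcal{M}_i=\mathcal{M}|_{E_i}=(E_i,\rho_i)$ and $\pi_i:E\to E_i$ the projections. Then (a) $\mathcal{M}_1$ is the trivial $q$-matroid on $E_1$; (b) $\rho(V)=\rho_2(\pi_2(V))$ for all $V\le E$; (c) $\mathcal{M}=\mathcal{M}_1\oplus\mathcal{M}_2$. Moreover, $\mathrm{cl}(0)$ consists of all vectors $x\in E$ with $\rho(\langle x\rangle)=0$.
   Context: Let $\mathbb{F}=\mathbb{F}_q$. A $q$-matroid is $\mathcal{M}=(E,\rho)$, $E$ a finite-dimensional $\mathbb{F}$-vector space, $\rho$ from subspaces to $\mathbb{Z}_{\ge0}$ with $0\le\rho(V)\le\dim V$, monotone and submodular. Closure: $\mathrm{cl}(V)=\sum\{\langle x\rangle:\rho(V+\langle x\rangle)=\rho(V)\}$. Restriction $\mathcal{M}|_X=(X,\rho|_{\mathcal{L}(X)})$. Trivial $q$-matroid: rank identically $0$. $\mathcal{M}=\mathcal{M}_1\oplus\mathcal{M}_2$ means $E=E_1\oplus E_2$ and $\rho(V)=\dim V+\min_{X\le V}(\rho_1(\pi_1(X))+\rho_2(\pi_2(X))-\dim X)$ for all $V$. *)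

(* Defs.v *)
From HB Require Import structures.
From mathcomp Require Import all_boot all_order all_algebra all_field.
Set Implicit Arguments. Unset Strict Implicit. Unset Printing Implicit Defensive.
Import GRing.Theory.
Local Open Scope ring_scope.

(* Ambient space: 'rV[F]_n with F a finite field (F = F_q, q = #|F|).
   A q-matroid is given by a ground subspace E and a rank function rho on
   subspaces; only its values on subspaces of E matter. *)

Definition qmatroid (F : finFieldType) (n : nat) (E : {vspace 'rV[F]_n})
  (rho : {vspace 'rV[F]_n} -> nat) : Prop :=
  [/\ (forall V, (V <= E)%VS -> (rho V <= \dim V)%N),
      (forall U V, (U <= V)%VS -> (V <= E)%VS -> (rho U <= rho V)%N)
    & (forall U V, (U <= E)%VS -> (V <= E)%VS ->
         (rho (U + V)%VS + rho (U :&: V)%VS <= rho U + rho V)%N)].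

Definition qclosure (F : finFieldType) (n : nat) (E : {vspace 'rV[F]_n})
  (rho : {vspace 'rV[F]_n} -> nat) (V : {vspace 'rV[F]_n}) : {vspace 'rV[F]_n} :=
  (\sum_(x : 'rV[F]_n | (x \in E) && (rho (V + <[x]>)%VS == rho V)) <[x]>)%VS.

(* Restriction M|_X = (X, rho restricted to subspaces of X): represented by
   the pair (X, rho), since all notions only evaluate rho on subspaces of X. *)

Definition qtrivial (F : finFieldType) (n : nat) (E : {vspace 'rV[F]_n})
  (rho : {vspace 'rV[F]_n} -> nat) : Prop :=
  forall V, (V <= E)%VS -> rho V = 0%N.

Definition qdirect_sum (F : finFieldType) (n : nat)
  (E : {vspace 'rV[F]_n}) (rho : {vspace 'rV[F]_n} -> nat)
  (E1 : {vspace 'rV[F]_n}) (rho1 : {vspace 'rV[F]_n} -> nat)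
  (E2 : {vspace 'rV[F]_n}) (rho2 : {vspace 'rV[F]_n} -> nat) : Prop :=
  let pi1 := daddv_pi E1 E2 in
  let pi2 := daddv_pi E2 E1 in
  let val X : int := (rho1 (pi1 @: X)%VS)%:Z + (rho2 (pi2 @: X)%VS)%:Z - (\dim X)%:Z in
  [/\ (E1 :&: E2 = 0)%VS, (E1 + E2)%VS = E &
    forall V, (V <= E)%VS ->
      (forall X, (X <= V)%VS -> (rho V)%:Z <= (\dim V)%:Z + val X) /\
      (exists2 X, (X <= V)%VS & (rho V)%:Z = (\dim V)%:Z + val X)].

(* Main.v *)
Require Import Defs.
From HB Require Import structures.
From mathcomp Require Import all_boot all_order all_algebra all_field.
From mathcomp Require Import zify.
Import GRing.Theory.
Local Open Scope ring_scope.
Set Implicit Arguments. Unset Strict Implicit.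

Section Aux.
Variables (F : finFieldType) (n : nat) (rho : {vspace 'rV[F]_n} -> nat).
Hypothesis Hq : qmatroid fullv rho.

Lemma rho0 : rho 0%VS = 0%N.
Proof. case: Hq => Hd _ _; have := Hd 0%VS (subvf _); rewrite dimv0; lia. Qed.

Lemma rho_mono U V : (U <= V)%VS -> (rho U <= rho V)%N.
Proof. by case: Hq => _ Hm _ H; apply: Hm H (subvf _). Qed.

Lemma rho_sub U V : (rho (U + V)%VS + rho (U :&: V)%VS <= rho U + rho V)%N.
Proof. by case: Hq => _ _ Hs; apply: Hs; apply: subvf. Qed.

Lemma rho_dim V : (rho V <= \dim V)%N.
Proof. by case: Hq => Hd _ _; apply: Hd (subvf _). Qed.

Lemma rho_add0 A B : rho B = 0%N -> rho (A + B)%VS = rho A.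
Proof.
move=> HB; have := rho_sub A B; have := rho_mono (addvSl A B); rewrite HB; lia.
Qed.

Lemma rho_cl0 : rho (qclosure fullv rho 0%VS) = 0%N.
Proof.
rewrite /qclosure; apply: (big_ind (fun A => rho A = 0%N)).
- exact: rho0.
- by move=> A B HA HB; rewrite rho_add0.
- by move=> x /andP [_ /eqP]; rewrite add0v rho0.
Qed.

Lemma rho_diff X V : (X <= V)%VS -> (rho V + \dim X <= rho X + \dim V)%N.
Proof.
move=> XV; set W := (V :\: X)%VS.
have eV : (W + X = V)%VS by rewrite /W -{2}(addv_diff_cap V X) (capv_idPr XV).
have e0 : (W :&: X = 0)%VS by rewrite /W capv_diff.
have := dimv_sum_cap W X; rewrite eV e0 dimv0.
have := rho_sub W X; rewrite eV e0 rho0.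
have := rho_dim W. lia.
Qed.
End Aux.

Theorem proposition7p6 (F : finFieldType) (n : nat)
  (rho : {vspace 'rV[F]_n} -> nat) (E2 : {vspace 'rV[F]_n}) :
  qmatroid fullv rho ->
  let E1 := qclosure fullv rho 0%VS in
  (E1 :&: E2 = 0)%VS -> (E1 + E2)%VS = fullv ->
  [/\ qtrivial E1 rho,
      (forall V : {vspace 'rV[F]_n}, rho V = rho (daddv_pi E2 E1 @: V)%VS),
      qdirect_sum fullv rho E1 rho E2 rho
    & (forall x : 'rV[F]_n, x \in E1 <-> rho <[x]>%VS = 0%N)].
Proof.
move=> Hq E1 Hcap Hsum.
have HE1 : rho E1 = 0%N by exact: rho_cl0.
have Htriv : qtrivial E1 rho.
  move=> V VE; have := rho_mono Hq VE; rewrite HE1; lia.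
have Hcap' : (E2 :&: E1 = 0)%VS by rewrite capvC.
have Hb : forall V : {vspace 'rV[F]_n}, rho V = rho (daddv_pi E2 E1 @: V)%VS.
  move=> V.
  have eq : (V + E1 = daddv_pi E2 E1 @: V + E1)%VS.
    apply/subv_anti/andP; split; rewrite subv_add addvSr andbT.
    - apply/subvP => v Vv.
      have vs : v \in (E2 + E1)%VS by rewrite addvC Hsum memvf.
      rewrite -(daddv_pi_add Hcap' vs).
      by apply: memv_add; [apply: memv_img | apply: memv_pi].
    - apply/subvP => w /memv_imgP [v Vv ->].
      have e : daddv_pi E2 E1 v = v - daddv_pi E1 E2 v.
        have vs : v \in (E2 + E1)%VS by rewrite addvC Hsum memvf.
        by rewrite -{2}(daddv_pi_add Hcap' vs) addrK.
      by rewrite e; apply: memv_add => //; rewrite memvN memv_pi.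
  by rewrite -(rho_add0 Hq V HE1) eq rho_add0.
split => //.
- split => // V _; rewrite -/(daddv_pi E1 E2).
  have H1 : forall X, rho (daddv_pi E1 E2 @: X)%VS = 0%N.
    move=> X; apply: Htriv; apply/subvP => w /memv_imgP [v _ ->]; exact: memv_pi.
  split.
  + move=> X XV; rewrite H1 -Hb.
    have := rho_diff Hq XV; have := dimvS XV; lia.
  + exists V => //; rewrite H1 -Hb; lia.
- move=> x; split.
  + by move=> xE; apply: Htriv; rewrite -memvE.
  + move=> H; rewrite memvE /E1 /qclosure.
    apply: (sumv_sup x) => //; rewrite memvf /= add0v H rho0 //.
Qed.
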